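(* Let $V'$ be a finite set of nodes, $k\ge 1$ an integer (number of clusters, labelled $1,\dots,k$), and $E'^{\mathrm{CL}}$ a set of unordered pairs $\{i,j\}$ of distinct nodes of $V'$ (hard cannot-link constraints). Let $H=(V',E'^{\mathrm{CL}})$ and $\Delta(H)=\max_{i\in V'}\deg_H(i)$. Suppose a feasible assignment exists, i.e. there is a map $c:V'\to\{1,\dots,k\}$ with $c(i)\neq c(j)$ for all $\{i,j\}\in E'^{\mathrm{CL}}$. Let $q$ be an integer with $q\ge \min(1+\Delta(H),k)$ (and $q\le k$), and for every $i\in V'$ let $L_i\subseteq\{1,\dots,k\}$ contain the $q$ clusters whose centers are nearest to node $i$ (possibly together with additional clusters). Then the model (R($q$)MBLP) described in the context has a feasible solution, and hence solving it yields an assignment of every node to a cluster that satisfies all hard cannot-link constraints.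
   Context: Setting: nodes $i\in V'$ have feature vectors and positive integer weights $s_i$; there are $k$ cluster centers, and $d_{il}\ge 0$ denotes the squared Euclidean distance between node $i$ and the center of cluster $l$. Besides the hard cannot-link pairs $E'^{\mathrm{CL}}$, there are sets $E'^{\mathrm{SCL}}$ and $E'^{\mathrm{SML}}$ of pairs (soft cannot-link and soft must-link constraints) with weights $w'_{ij}>0$, and a penalty $P>0$. Given the sets $L_i$, define $E''^{\mathrm{CL}}=\{\{i,j\}\in E'^{\mathrm{CL}}: L_i\cap L_j\neq\emptyset\}$, $E''^{\mathrm{SCL}}=\{\{i,j\}\in E'^{\mathrm{SCL}}: L_i\cap L_j\neq\emptyset\}$, and let $E''^{\mathrm{SML}}\subseteq E'^{\mathrm{SML}}$. The model (R($q$)MBLP) is: minimize $\sum_{i\in V'}\sum_{l\in L_i}s_i d_{il}x_{il}+P\big(\sum_{\{i,j\}\in E''^{\mathrm{SCL}}}w'_{ij}y_{ij}+\sum_{\{i,j\}\in E''^{\mathrm{SML}}}w'_{ij}z_{ij}\big)$ subject to $\sum_{l\in L_i}x_{il}=1$ for all $i\in V'$; $x_{il}+x_{jl}\le 1$ for all $\{i,j\}\in E''^{\mathrm{CL}}$, $l\in L_i\cap L_j$; $x_{il}+x_{jl}\le 1+y_{ij}$ for all $\{i,j\}\in E''^{\mathrm{SCL}}$, $l\in L_i\cap L_j$; $x_{il}-x_{jl}\le z_{ij}$ for all $\{i,j\}\in E''^{\mathrm{SML}}$, $l\in L_i\cap L_j$; $x_{il}\le z_{ij}$ for $\{i,j\}\in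 E''^{\mathrm{SML}}$, $l\in L_i\setminus L_j$; $x_{jl}\le z_{ij}$ for $\{i,j\}\in E''^{\mathrm{SML}}$, $l\in L_j\setminus L_i$; $x_{il}\in\{0,1\}$ for $i\in V'$, $l\in L_i$; $y_{ij}\ge 0$, $z_{ij}\ge 0$. A solution assigns node $i$ to the unique cluster $l\in L_i$ with $x_{il}=1$. *)

(* Defs.v *)
From mathcomp Require Import all_boot all_order all_algebra.
Set Implicit Arguments. Unset Strict Implicit. Unset Printing Implicit Defensive.
Import Order.TTheory GRing.Theory Num.Theory.
Local Open Scope ring_scope.

(* A set of unordered pairs of distinct nodes is represented by a set of
   ordered pairs containing exactly one orientation of each unordered pair. *)
Definition unordered_pairs (V : finType) (E : {set V * V}) : Prop :=
  forall i j, (i, j) \in E -> (i != j) /\ ((j, i) \notin E).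

Definition deg (V : finType) (E : {set V * V}) (i : V) : nat :=
  #|[set j | ((i, j) \in E) || ((j, i) \in E)]|.

Definition maxdeg (V : finType) (E : {set V * V}) : nat :=
  (\max_(i : V) deg E i)%N.

Definition restrict_pairs (V : finType) (k : nat) (L : V -> {set 'I_k})
  (E : {set V * V}) : {set V * V} :=
  [set p in E | L p.1 :&: L p.2 != set0].

(* Feasibility of (R(q)MBLP) for binary x and real y, z. The objective
   (weights s_i, distances d, w', P) does not affect feasibility. *)
Definition RMBLP_feasible (R : realFieldType) (V : finType) (k : nat)
  (L : V -> {set 'I_k}) (CL SCL SML2 : {set V * V})
  (x : V -> 'I_k -> bool) (y z : V -> V -> R) : Prop :=
  [/\ (forall i, \sum_(l in L i) ((x i l)%:R : R) = 1),
      (forall i j, (i, j) \in restrict_pairs L CL ->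
         forall l, l \in L i :&: L j -> ((x i l)%:R + (x j l)%:R : R) <= 1),
      (forall i j, (i, j) \in restrict_pairs L SCL ->
         forall l, l \in L i :&: L j -> ((x i l)%:R + (x j l)%:R : R) <= 1 + y i j),
      (forall i j, (i, j) \in SML2 ->
         [/\ (forall l, l \in L i :&: L j -> ((x i l)%:R - (x j l)%:R : R) <= z i j),
             (forall l, l \in L i :\: L j -> ((x i l)%:R : R) <= z i j) &
             (forall l, l \in L j :\: L i -> ((x j l)%:R : R) <= z i j)]) &
      ((forall i j, (i, j) \in restrict_pairs L SCL -> 0 <= y i j) /\
       (forall i j, (i, j) \in SML2 -> 0 <= z i j))].

(* Main.v *)
Require Import Defs.
From mathcomp Require Import all_boot all_order all_algebra.
From mathcomp Require Import zify lra.
Import Order.TTheory GRing.Theory Num.Theory.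
Local Open Scope ring_scope.

Lemma greedy (V : finType) (k : nat) (CL : {set V * V}) (L : V -> {set 'I_k}) :
  (0 < k)%N -> unordered_pairs CL ->
  (forall i, (deg CL i < #|L i|)%N) ->
  forall n (S : {set V}), (#|S| <= n)%N ->
  exists c : V -> 'I_k, (forall i, i \in S -> c i \in L i) /\
    (forall i j, (i, j) \in CL -> i \in S -> j \in S -> c i != c j).
Proof.
move=> kpos hU hL; elim=> [|n IH] S hS.
  exists (fun _ => Ordinal kpos); split=> [i|i j _]; move: hS; rewrite leqn0 => /eqP/cards0_eq -> ;
  by rewrite inE.
have [->|[v vS]] := set_0Vmem S.
  by exists (fun _ => Ordinal kpos); split=> [i|i j _]; rewrite inE.
have hS' : (#|S :\ v| <= n)%N.
  by move: hS; rewrite (cardsD1 v S) vS; lia.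
have [c' [c'L c'P]] := IH _ hS'.
set B := [set c' u | u in [set u | ((v, u) \in CL) || ((u, v) \in CL)]].
have hB : (#|B| <= deg CL v)%N by apply: leq_imset_card.
have : (0 < #|L v :\: B|)%N.
  have := hL v; rewrite cardsD.
  have : (#|L v :&: B| <= #|B|)%N by apply: subset_leq_card; apply: subsetIr.
  lia.
rewrite card_gt0 => /set0Pn [l]; rewrite inE => /andP [lB lL].
exists (fun u => if u == v then l else c' u); split.
  move=> i iS; case: eqP => [->//|/eqP iv]; apply: c'L.
  by rewrite !inE iv.
move=> i j ij iS jS; have [ne _] := hU _ _ ij.
case: (eqVneq i v) => [iv|iv]; case: (eqVneq j v) => [jv|jv].
- by move: ne; rewrite iv jv eqxx.
- subst i; apply/eqP => e; move: lB; rewrite e.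
  by case/negP; apply/imsetP; exists j => //; rewrite inE ij.
- subst j; apply/eqP => e; move: lB; rewrite -e.
  by case/negP; apply/imsetP; exists i => //; rewrite inE ij orbT.
- by apply: c'P => //; rewrite !inE ?iv ?jv.
Qed.

Theorem lemma1 (R : realFieldType) (V : finType) (k : nat)
  (CL SCL SML SML2 : {set V * V}) (d : V -> 'I_k -> R)
  (L : V -> {set 'I_k}) (q : nat) :
  (0 < k)%N ->
  unordered_pairs CL -> unordered_pairs SCL -> unordered_pairs SML ->
  SML2 \subset SML ->
  (forall i l, 0 <= d i l) ->
  (exists c : V -> 'I_k, forall i j, (i, j) \in CL -> c i != c j) ->
  (minn (maxdeg CL).+1 k <= q)%N -> (q <= k)%N ->
  (forall i, exists N : {set 'I_k},
      [/\ N \subset L i, #|N| = q &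
          forall l l', l \in N -> l' \notin N -> d i l <= d i l']) ->
  (exists (x : V -> 'I_k -> bool) (y z : V -> V -> R),
      RMBLP_feasible L CL SCL SML2 x y z) /\
  (forall (x : V -> 'I_k -> bool) (y z : V -> V -> R),
      RMBLP_feasible L CL SCL SML2 x y z ->
      forall i j, (i, j) \in CL ->
      forall l l', l \in L i -> x i l -> l' \in L j -> x j l' -> l != l').
Proof.
move=> kpos hU _ _ _ _ [c0 hc0] hq qk hN.
have hLq : forall i, (q <= #|L i|)%N.
  move=> i; have [N [NL <- _]] := hN i; exact: subset_leq_card.
have [col [colL colP]] : exists col : V -> 'I_k, (forall i, col i \in L i) /\
    (forall i j, (i, j) \in CL -> col i != col j).
  case: (leqP k (maxdeg CL).+1) => hk.
    have LT : forall i, L i = setT.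
      move=> i; apply/eqP; rewrite eqEcard subsetT cardsT card_ord.
      have := hLq i; move: hq; rewrite /minn; case: ifP; lia.
    by exists c0; split=> // i; rewrite LT inE.
  have hL : forall i, (deg CL i < #|L i|)%N.
    move=> i; have := hLq i; have : (deg CL i <= maxdeg CL)%N.
      by rewrite /maxdeg; apply: (leq_bigmax i).
    move: hq; rewrite /minn; case: ifP; lia.
  have [c [cL cP]] := @greedy V k CL L kpos hU hL _ _ (leqnn #|[set: V]|).
  by exists c; split=> [i|i j ij]; [apply: cL | apply: cP]; rewrite ?inE.
split.
  exists (fun i l => col i == l), (fun _ _ => 1), (fun _ _ => 1).
  split.
  - move=> i; rewrite (bigD1 (col i)) //= eqxx big1 ?addr0 //.
    by move=> l /andP [_ ne]; rewrite eq_sym (negbTE ne).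
  - move=> i j ij l _; have := colP _ _ (setIdP ij).1.
    move=> ne /=; case: eqP => [ei|_]; case: eqP => [ej|_]; rewrite /= ?add0r ?addr0 ?ler01 ?lexx //; by move: ne; rewrite ei ej eqxx.
  - move=> i j _ l _; case: (_ == _); case: (_ == _) => /=; lra.
  - move=> i j _; split=> l _.
    + case: (_ == _); case: (_ == _) => /=; lra.
    + case: (_ == _) => /=; lra.
    + case: (_ == _) => /=; lra.
  - by split=> *; apply: ler01.
move=> x y z [_ hCL _ _ _] i j ij l l' li xil lj xjl.
apply/eqP => e; subst l'.
have hr : (i, j) \in restrict_pairs L CL.
  rewrite inE ij /=; apply/set0Pn; exists l; by rewrite inE li.
have := hCL _ _ hr l; rewrite inE li lj xil xjl => /(_ isT).
move=> /=; lra.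
Qed.
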